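(* Let $R$ be a ring with identity, let ${}_RM$ be a semisimple left $R$-module and let $\varphi:M\to M$ be a nonzero nilpotent $R$-endomorphism. Then the following are equivalent: (1) there is a nilpotent Jordan normal base $\{x_i\mid 1\le i\le n\}$ of ${}_RM$ with respect to $\varphi$ consisting of one block (i.e. $x_{i+1}=\varphi(x_i)$ for $1\le i<n$ and $\varphi(x_n)=0$); (2) $\varphi$ is an indecomposable nilpotent element of the ring $\mathrm{Hom}_R(M,M)$; (3) ${}_RM$ is finitely generated and $\varphi^{d-1}\neq0$, where $d=\dim_R(M)$ is the composition length of ${}_RM$.
   Context: For an $R$-endomorphism $\varphi$ of a left $R$-module ${}_RM$, a subset $\{x_{\gamma,i}\mid\gamma\in\Gamma,1\le i\le k_\gamma\}\subseteq M$ (with integers $k_\gamma\ge1$) is a nilpotent Jordan normal base of ${}_RM$ with respect to $\varphi$ if each submodule $Rx_{\gamma,i}$ is simple, $M=\bigoplus_{\gamma,i}Rx_{\gamma,i}$ is a direct sum, $\varphi(x_{\gamma,i})=x_{\gamma,i+1}$ for $1\le i<k_\gamma$, $\varphi(x_{\gamma,k_\gamma})=0$, and $\{k_\gamma\mid\gamma\in\Gamma\}$ is bounded; $\Gamma$ is the set of blocks. A nilpotent element $s$ of a ring $S$ is decomposable if $es=se$ for some idempotent $e\in S$ with $0\ne e\ne1$; a nilpotent element which is not decomposable is indecomposable. *)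

(* Defs.v *)
From HB Require Import structures.
From mathcomp Require Import all_boot all_order all_algebra.
Set Implicit Arguments. Unset Strict Implicit. Unset Printing Implicit Defensive.
Import GRing.Theory.
Local Open Scope ring_scope.

Section ModuleDefs.
Variables (R : pzRingType) (M : lmodType R).

Definition submodule (S : M -> Prop) : Prop :=
  [/\ S 0, (forall x y, S x -> S y -> S (x + y)) & (forall (r : R) x, S x -> S (r *: x))].

Definition simple_submodule (S : M -> Prop) : Prop :=
  [/\ submodule S, (exists2 x, S x & x <> 0) &
      forall N : M -> Prop, submodule N -> (forall x, N x -> S x) ->
        (forall x, N x -> x = 0) \/ (forall x, S x -> N x)].

Definition cyclic_submodule (x : M) : M -> Prop := fun y => exists r : R, y = r *: x.

Definition direct_sum_cyclic (J : Type) (P : J -> Prop) (y : J -> M) : Prop :=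
  (forall m : M, exists n (f : 'I_n -> J) (r : 'I_n -> R),
       (forall i, P (f i)) /\ m = \sum_(i < n) r i *: y (f i)) /\
  (forall n (f : 'I_n -> J) (r : 'I_n -> R), injective f -> (forall i, P (f i)) ->
       \sum_(i < n) r i *: y (f i) = 0 -> forall i, r i *: y (f i) = 0).

Definition semisimple : Prop :=
  forall m : M, exists n (S : 'I_n -> M -> Prop) (v : 'I_n -> M),
    [/\ forall i, simple_submodule (S i), forall i, S i (v i) & m = \sum_(i < n) v i].

Definition finitely_generated : Prop :=
  exists n (g : 'I_n -> M), forall m : M, exists r : 'I_n -> R, m = \sum_(i < n) r i *: g i.

Definition composition_length (d : nat) : Prop :=
  exists N : nat -> M -> Prop,
    [/\ forall i, submodule (N i),
        forall x, N 0%N x -> x = 0,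
        forall x, N d x &
        forall i, (i < d)%N ->
          [/\ forall x, N i x -> N i.+1 x,
              (exists2 x, N i.+1 x & ~ N i x) &
              forall L : M -> Prop, submodule L ->
                (forall x, N i x -> L x) -> (forall x, L x -> N i.+1 x) ->
                (forall x, L x -> N i x) \/ (forall x, N i.+1 x -> L x)]].

Definition nilpotent_endo (phi : M -> M) : Prop :=
  exists n, forall x, iter n phi x = 0.

Definition nilpotent_jordan_base (phi : M -> M)
    (Gamma : Type) (k : Gamma -> nat) (x : Gamma -> nat -> M) : Prop :=
  [/\ forall g, (1 <= k g)%N,
      forall g i, (1 <= i <= k g)%N -> simple_submodule (cyclic_submodule (x g i)),
      direct_sum_cyclic (fun p : Gamma * nat => (1 <= p.2 <= k p.1)%N)
                        (fun p => x p.1 p.2),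
      (forall g i, (1 <= i < k g)%N -> phi (x g i) = x g i.+1) &
      (forall g, phi (x g (k g)) = 0) /\
      exists B, forall g, (k g <= B)%N].

Definition decomposable_nilpotent (s : {linear M -> M}) : Prop :=
  nilpotent_endo s /\
  exists e : {linear M -> M},
    [/\ forall x, e (e x) = e x, ~ (forall x, e x = 0), ~ (forall x, e x = x) &
        forall x, e (s x) = s (e x)].

Definition indecomposable_nilpotent (s : {linear M -> M}) : Prop :=
  nilpotent_endo s /\ ~ decomposable_nilpotent s.

End ModuleDefs.

(* Main.v *)
Require Import Defs.
From HB Require Import structures.
From mathcomp Require Import all_boot all_order all_algebra.
From Stdlib Require Import Classical ClassicalEpsilon.
From mathcomp Require classical_sets.
Import GRing.Theory.
Local Open Scope ring_scope.

Section Gen.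
Variables (R : pzRingType) (M : lmodType R).

Definition Qgen (x : M) := forall r : R, r *: x <> 0 -> exists s : R, s *: (r *: x) = x.

Lemma cyclic_sub (x : M) : submodule (cyclic_submodule x).
Proof.
split; first by exists 0; rewrite scale0r.
- by move=> a b [r ->] [s ->]; exists (r + s); rewrite scalerDl.
- by move=> r a [s ->]; exists (r * s); rewrite scalerA.
Qed.

Lemma simple_Q (S : M -> Prop) (x : M) : simple_submodule S -> S x -> Qgen x.
Proof.
case=> [[S0 SD SZ] _ Smin] Sx r rx.
have Hc : forall z, cyclic_submodule (r *: x) z -> S z.
  by move=> z [s ->]; rewrite scalerA; apply: SZ.
case: (Smin _ (cyclic_sub (r *: x)) Hc).
- by move=> /(_ (r *: x)) H; exfalso; apply: rx; apply: H; exists 1; rewrite scale1r.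
- by move=> /(_ x Sx) [s sE]; exists s; exact: esym sE.
Qed.

Lemma Q_simple (x : M) : x <> 0 -> Qgen x -> simple_submodule (cyclic_submodule x).
Proof.
move=> x0 Qx; split; first exact: cyclic_sub.
  by exists x => //; exists 1; rewrite scale1r.
move=> N [N0 ND NZ] NS.
case: (classic (forall z, N z -> z = 0)) => [|H]; first by left.
right.
have [z Nz zn0] : exists2 z, N z & z <> 0.
  apply: NNPP => H2; apply: H => z Nz; apply: NNPP => zn; apply: H2; by exists z.
case: (NS z Nz) => r zE; subst z.
case: (Qx r zn0) => s sE.
move=> y [t ->]; rewrite -sE; exact: (NZ _ _ (NZ _ _ Nz)).
Qed.

Lemma simple_nz (x : M) : simple_submodule (cyclic_submodule x) -> x <> 0.
Proof.
case=> _ [z [r ->]] zn _ x0; apply: zn; by rewrite x0 scaler0.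
Qed.

Lemma simple_Qx (x : M) : simple_submodule (cyclic_submodule x) -> Qgen x.
Proof. move=> H; exact: (@simple_Q _ x H (ex_intro _ 1 (esym (scale1r x)))). Qed.

Lemma ex_min_nat (P : nat -> Prop) k : P k -> exists j, P j /\ forall i, (i < j)%N -> ~ P i.
Proof.
elim: k {-2}k (leqnn k) => [|m IH] k.
  rewrite leqn0 => /eqP -> P0; exists 0%N; split => // i; by rewrite ltn0.
move=> km Pk. case: (classic (exists i, (i < k)%N /\ P i)) => [[i [ik Pi]]|H].
  apply: (IH i) => //; by rewrite -ltnS (leq_trans ik).
exists k; split => // i ik Pi; apply: H; by exists i.
Qed.

Lemma last_false (P : nat -> Prop) m : ~ P 0%N -> P m -> exists k, ~ P k /\ P k.+1.
Proof.
move=> P0 Pm; case: (@ex_min_nat P m Pm) => j [Pj Hj].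
case: j Pj Hj => [//|j] Pj Hj; exists j; split => //; apply: Hj; exact: ltnSn.
Qed.

Lemma regroup n n0 (g : 'I_n0 -> nat) (r : 'I_n0 -> R) (Y : nat -> M) :
  (forall i, (g i < n)%N) ->
  \sum_(i < n0) r i *: Y (g i) = \sum_(j < n) (\sum_(i < n0 | g i == j) r i) *: Y j.
Proof.
move=> gn.
rewrite (eq_bigr (fun j : 'I_n => \sum_(i < n0) (if g i == j then r i *: Y j else 0))); last first.
  move=> j _; rewrite scaler_suml big_mkcond /=; apply: eq_bigr => i _.
  by case: ifP => //; rewrite scale0r.
rewrite exchange_big /=; apply: eq_bigr => i _.
rewrite -big_mkcond /= (big_pred1 (Ordinal (gn i))) //= => j /=; rewrite eq_sym.
Qed.

End Gen.
Arguments Qgen {R M}.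
Arguments cyclic_sub {R M}.
Arguments simple_Q {R M S x}.
Arguments Q_simple {R M x}.
Arguments simple_nz {R M x}.
Arguments simple_Qx {R M x}.
Arguments regroup {R M}.

Section Iter.
Variables (R : pzRingType) (M : lmodType R) (phi : {linear M -> M}).

Lemma iter0' k : iter k phi 0 = 0.
Proof. elim: k => //= k ->; exact: linear0. Qed.
Lemma iterDl k a b : iter k phi (a + b) = iter k phi a + iter k phi b.
Proof. elim: k => //= k ->; exact: linearD. Qed.
Lemma iterZ k (r : R) a : iter k phi (r *: a) = r *: iter k phi a.
Proof. elim: k => //= k ->; exact: linearZ. Qed.
Lemma iterN k a : iter k phi (- a) = - iter k phi a.
Proof. by rewrite -scaleN1r iterZ scaleN1r. Qed.
Lemma iter_sum k n (F : 'I_n -> M) :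
  iter k phi (\sum_(i < n) F i) = \sum_(i < n) iter k phi (F i).
Proof. exact: (big_morph _ (iterDl k) (iter0' k)). Qed.

Lemma Q_iter k (v : M) : Qgen v -> Qgen (iter k phi v).
Proof.
move=> Qv r rv.
have rv' : r *: v <> 0 by move=> h; apply: rv; rewrite -iterZ h iter0'.
case: (Qv r rv') => s sE; exists s; by rewrite -!iterZ sE.
Qed.

Lemma last_nz (w : M) m : w <> 0 -> iter m phi w = 0 ->
  exists k, iter k phi w <> 0 /\ phi (iter k phi w) = 0.
Proof.
move=> w0 wm.
have [k [k1 k2]] := @last_false (fun k => iter k phi w = 0) m w0 wm.
by exists k.
Qed.

Section Chain.
Variables (x0 : M) (n : nat).
Hypothesis Qx0 : Qgen x0.
Hypothesis xnz : iter n.-1 phi x0 <> 0.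
Hypothesis xn0 : iter n phi x0 = 0.

Let X j := iter j phi x0.

Lemma n_gt0 : (0 < n)%N.
Proof. by case: n xnz xn0. Qed.

Lemma X_ge j : (n <= j)%N -> X j = 0.
Proof. move=> nj; rewrite /X -(subnK nj) iterD xn0 iter0'. done. Qed.

Lemma X_ann0 r j : r *: x0 = 0 -> r *: X j = 0.
Proof. by move=> h; rewrite /X -iterZ h iter0'. Qed.

Lemma X_annback r j : (j < n)%N -> r *: X j = 0 -> r *: x0 = 0.
Proof.
move=> jn h; apply: NNPP => rx; case: (Qx0 _ rx) => s sE.
apply: xnz; rewrite -sE !iterZ.
have -> : iter n.-1 phi x0 = iter (n.-1 - j) phi (X j).
  by rewrite /X -iterD subnK // -ltnS prednK // n_gt0.
by rewrite -iterZ h iter0' scaler0.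
Qed.

Lemma X_nz j : (j < n)%N -> X j <> 0.
Proof.
move=> jn h; apply: xnz.
have h1 : 1 *: X j = 0 by rewrite h scaler0.
have := @X_ann0 1 n.-1 (@X_annback 1 j jn h1).
by rewrite scale1r.
Qed.

Lemma QX j : (j < n)%N -> Qgen (X j).
Proof. move=> _; exact: Q_iter. Qed.

Definition span (a : M) := exists s : nat -> R, a = \sum_(j < n) s j *: X j.

Lemma indep (s : nat -> R) : \sum_(j < n) s j *: X j = 0 ->
  forall j, (j < n)%N -> s j *: X j = 0.
Proof.
move=> hs j; elim/ltn_ind: j => j IH jn.
have := congr1 (iter (n.-1 - j) phi) hs.
rewrite iter0' iter_sum (bigD1 (Ordinal jn)) //= big1 ?addr0; last first.
  move=> i /negbTE ij; rewrite iterZ /X -iterD.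
  case: (ltngtP i j) => [lij|gij|eij]; last by move: ij; rewrite -val_eqE /= eij eqxx.
    have := IH _ lij (leq_trans lij (ltnW jn)).
    move/(@X_annback (s i) i (ltn_ord i)) => h; exact: X_ann0.
  have -> : iter (n.-1 - j + i) phi x0 = 0.
    apply: (X_ge (n.-1 - j + i)).
    have : (n <= n.-1 - j + j.+1)%N by rewrite addnS subnK ?prednK ?n_gt0 // -ltnS prednK // n_gt0.
    move=> h; apply: (leq_trans h). by rewrite leq_add2l.
  by rewrite scaler0.
rewrite iterZ /X -iterD subnK; last by rewrite -ltnS prednK // n_gt0.
move=> h; have h2 := @X_annback (s j) n.-1 _ h.
apply: X_ann0; apply: h2. by rewrite prednK // n_gt0.
Qed.


Lemma nE : exists n', n = n'.+1.
Proof. exists n.-1; by rewrite prednK // n_gt0. Qed.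

Lemma phi_sum (s : nat -> R) : phi (\sum_(j < n) s j *: X j) = \sum_(j < n) s j *: X j.+1.
Proof. rewrite linear_sum; apply: eq_bigr => j _; by rewrite linearZ. Qed.

Lemma shift (s : nat -> R) : \sum_(j < n) s j *: X j.+1 =
  \sum_(j < n) (if (j : nat) is j'.+1 then s j' else 0) *: X j.
Proof.
have [n' En] := nE.
have Xn : X n'.+1 = 0 by rewrite -En; apply: X_ge.
have Xn' : phi (X n') = 0 by exact: Xn.
rewrite En big_ord_recr big_ord_recl /= Xn' scaler0 addr0 scale0r add0r.
apply: eq_bigr => i _; by [].
Qed.

Lemma span_sub : submodule span.
Proof.
split.
- exists (fun _ => 0); rewrite big1 // => i _; by rewrite scale0r.
- move=> a b [s ->] [t ->]; exists (fun j => s j + t j); rewrite -big_split /=.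
  apply: eq_bigr => i _; by rewrite scalerDl.
- move=> r a [s ->]; exists (fun j => r * s j); rewrite scaler_sumr.
  apply: eq_bigr => i _; by rewrite scalerA.
Qed.

Lemma span_X j : (j < n)%N -> span (X j).
Proof.
move=> jn; exists (fun i => if i == j then 1 else 0).
rewrite (bigD1 (Ordinal jn)) //= eqxx scale1r big1 ?addr0 // => i /negbTE ij.
have -> : (i == j :> nat) = false by rewrite -ij -val_eqE.
by rewrite scale0r.
Qed.

Lemma span_phi a : span a -> span (phi a).
Proof.
move=> [s ->]; rewrite phi_sum shift.
by exists (fun j => if j is j'.+1 then s j' else 0).
Qed.

Lemma iter_span a : span a -> iter n phi a = 0.
Proof.
move=> [s ->]; rewrite iter_sum big1 // => i _.
rewrite iterZ (_ : iter n phi (X i) = X (n + i)).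
  by rewrite (@X_ge (n + i) (leq_addr i n)) scaler0.
by rewrite /X iterD.
Qed.

Lemma pre_image a : span a -> iter n.-1 phi a = 0 ->
  exists b, [/\ span b, phi b = a & forall r, r *: a = 0 -> r *: b = 0].
Proof.
move=> [s aE] ha.
have [n' En] := nE.
have s0 : s 0%N *: x0 = 0.
  apply: (@X_annback (s 0%N) n.-1); first by rewrite prednK // n_gt0.
  move: ha; rewrite aE iter_sum En big_ord_recl /= big1 ?addr0.
    by rewrite iterZ /X /=.
  move=> i _; rewrite iterZ.
  have h : (n <= n' + i.+1)%N by rewrite En addnS ltnS leq_addr.
  rewrite -[X in _ *: X = 0]/(iter n' phi (iter i.+1 phi x0)) -iterD.
  have := @X_ge _ h; rewrite /X => ->; by rewrite scaler0.
exists (\sum_(j < n) (if (j.+1 < n)%N then s j.+1 else 0) *: X j); split.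
- by exists (fun j => if (j.+1 < n)%N then s j.+1 else 0).
- rewrite (phi_sum (fun j => if (j.+1 < n)%N then s j.+1 else 0)) (eq_bigr (fun j : 'I_n => s j.+1 *: X j.+1)); last first.
    move=> j _; case: ifP => // /negbT; rewrite -leqNgt => h.
    by rewrite X_ge // scale0r scaler0.
  rewrite aE En big_ord_recr big_ord_recl /= s0 add0r.
  have -> : phi (X n') = 0 by rewrite /X -iterS -En xn0.
  by rewrite scaler0 addr0.
- move=> r ra.
  have h : \sum_(j < n) (r * s j) *: X j = 0.
    transitivity (r *: a); last exact: ra.
    rewrite aE scaler_sumr; apply: eq_bigr => i _; by rewrite scalerA.
  rewrite scaler_sumr big1 // => j _; rewrite scalerA.
  case: ifP => jn; last by rewrite mulr0 scale0r.
  apply: X_ann0; exact: (@X_annback (r * s j.+1) j.+1 jn (@indep (fun j => r * s j) h j.+1 jn)).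
Qed.

Section Full.
Hypothesis full : forall m, span m.

Lemma nil_full m : iter n phi m = 0.
Proof. exact: iter_span. Qed.

Lemma ker_full a : phi a = 0 -> exists r, a = r *: X n.-1.
Proof.
have [s aE] := full a; move=> pa.
have h := pa; rewrite aE phi_sum shift in h.
have [n' En] := nE.
exists (s n'); rewrite aE En big_ord_recr /= big1 ?add0r // => i _.
have i1 : (i.+1 < n)%N by rewrite En ltnS.
have := @indep (fun j => if j is j'.+1 then s j' else 0) h _ i1 => /= h2.
apply: X_ann0; exact: (@X_annback _ i.+1 i1).
Qed.

Lemma full_P0 : exists (Gamma : Type) (k : Gamma -> nat) (x : Gamma -> nat -> M),
          nilpotent_jordan_base phi k x /\ exists g0 : Gamma, forall g, g = g0.
Proof.
exists unit, (fun _ => n), (fun _ i => X i.-1); split; last by exists tt; case.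
have npos := n_gt0.
split.
- by move=> _.
- move=> _ i /andP [i1 iN].
  have hi : (i.-1 < n)%N by rewrite prednK.
  exact: (@Q_simple R M (X i.-1) (@X_nz i.-1 hi) (@QX i.-1 hi)).
- split.
  + move=> m; have [s ->] := full m.
    exists n, (fun j : 'I_n => (tt, j.+1)), (fun j => s j); split => //.
    move=> i /=; exact: ltn_ord.
  + move=> n0 f r finj fP hs i.
    pose g := fun i => ((f i).2).-1.
    have gn : forall i, (g i < n)%N.
      by move=> i'; rewrite /g; case/andP: (fP i') => h1 h2; rewrite prednK.
    rewrite (regroup n n0 g r X gn) in hs.
    have := @indep (fun j => \sum_(i < n0 | g i == j) r i) hs _ (gn i).
    rewrite (big_pred1 i) // => i' /=.
    apply/eqP/eqP => [ge|->] //.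
    apply: finj; move: ge; rewrite /g.
    case/andP: (fP i') => h1 _; case/andP: (fP i) => h3 _.
    move=> ge; have e2 : (f i').2 = (f i).2 by rewrite -(prednK h1) ge prednK.
    move: e2; case: (f i') => [[] a]; case: (f i) => [[] b] /= ->. done.
- by move=> _ [|i].
- split; last by exists n.
  move=> _; by rewrite -xn0 -{2}(prednK npos).
Qed.


Lemma npred : (n.-1 < n)%N.
Proof. by rewrite ltn_predL n_gt0. Qed.

Lemma full_P2 : finitely_generated M /\
         exists d : nat, composition_length M d /\ exists x : M, iter d.-1 phi x <> 0.
Proof.
have npos := n_gt0.
split.
  exists n, (fun i : 'I_n => X i) => m; have [s ->] := full m.
  by exists (fun i : 'I_n => s i).
exists n; split; last by exists x0.
exists (fun i a => iter i phi a = 0); split.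
- move=> i; split.
  + exact: iter0'.
  + by move=> a b ha hb; rewrite iterDl ha hb addr0.
  + by move=> r a ha; rewrite iterZ ha scaler0.
- by [].
- exact: nil_full.
- move=> i iN; split.
  + by move=> a /= ha; rewrite ?iterS ha linear0.
  + have ii : (i <= n.-1)%N by rewrite -ltnS prednK.
    exists (X (n.-1 - i)).
      rewrite /X -iterD -[(i.+1 + _)%N]/((i + (n.-1 - i)).+1) subnKC //.
      by rewrite prednK.
    by rewrite /X -iterD subnKC.
  + move=> L [L0 LD LZ] Hi Hi1.
    case: (classic (forall x, L x -> iter i phi x = 0)) => [h|h]; first by left.
    right.
    have [y [Ly yn]] : exists y, L y /\ iter i phi y <> 0.
      apply: NNPP => h2; apply: h => x Lx; apply: NNPP => hx; apply: h2; by exists x.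
    move=> z hz.
    have [r rE] := @ker_full (iter i phi y) (Hi1 y Ly).
    have [t tE] := @ker_full (iter i phi z) hz.
    have hrX : r *: X n.-1 <> 0 by rewrite -rE.
    have [u uE] := @QX n.-1 npred r hrX.
    have hz' : L (z - (t * u) *: y).
      apply: Hi => /=; rewrite iterDl iterN iterZ rE tE -scalerA uE.
      by rewrite subrr.
    have -> : z = (z - (t * u) *: y) + (t * u) *: y by rewrite subrK.
    by apply: LD => //; apply: LZ.
Qed.

Lemma full_P1 : indecomposable_nilpotent phi.
Proof.
have npos := n_gt0.
split; first by exists n; exact: nil_full.
case=> _ [e [eid e0 e1 ecomm]].
have eiter : forall k v, e (iter k phi v) = iter k phi (e v).
  by elim=> //= k IH v; rewrite ecomm IH.
have [y ey] : exists y, e y <> 0.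
  apply: NNPP => h; apply: e0 => x; apply: NNPP => hx; apply: h; by exists x.
have [z ez] : exists z, e z <> z.
  apply: NNPP => h; apply: e1 => x; apply: NNPP => hx; apply: h; by exists x.
have [k [wk pk]] := @last_nz (e y) n ey (nil_full _).
have [k' [wk' pk']] : exists k', iter k' phi (z - e z) <> 0 /\ phi (iter k' phi (z - e z)) = 0.
  apply: (@last_nz _ n); last exact: nil_full.
  by move/eqP; rewrite subr_eq0 eq_sym => /eqP.
have [r rE] := @ker_full _ pk.
have [t tE] := @ker_full _ pk'.
have htX : t *: X n.-1 <> 0 by rewrite -tE.
have [u uE] := @QX n.-1 npred t htX.
have e1' : e (iter k phi (e y)) = iter k phi (e y) by rewrite eiter eid.
have e2' : e (iter k' phi (z - e z)) = 0.
  by rewrite eiter linearB eid subrr iter0'.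
apply: wk; rewrite -e1' rE -uE -tE scalerA linearZZ e2'; exact: scaler0.
Qed.

End Full.
End Chain.
End Iter.

Arguments span {R M} phi x0 n a.

Section Main.
Variables (R : pzRingType) (M : lmodType R) (phi : {linear M -> M}).

Definition chain_data (x0 : M) (n : nat) :=
  [/\ Qgen x0, iter n.-1 phi x0 <> 0 & iter n phi x0 = 0].

Lemma P0_full (Gamma : Type) (k : Gamma -> nat) (x : Gamma -> nat -> M) :
  nilpotent_jordan_base phi k x -> (exists g0 : Gamma, forall g, g = g0) ->
  exists x0 n, chain_data x0 n /\ forall m, span phi x0 n m.
Proof.
case=> kpos simp [dspan _] step [last _] [g0 allg].
set n := k g0; set x0 := x g0 1%N.
have npos : (0 < n)%N := kpos g0.
have xE : forall j, (j.+1 <= n)%N -> x g0 j.+1 = iter j phi x0.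
  elim=> [//|j IH] jn.
  have h1 : (0 < j.+1 < k g0)%N by apply/andP; split.
  by rewrite -(step g0 j.+1 h1) IH // ltnW.
have xn : x g0 n = iter n.-1 phi x0 by rewrite -xE prednK.
exists x0, n; split; first split.
- apply: simple_Qx; apply: simp; by rewrite leqnn.
- rewrite -xn; apply: simple_nz; apply: simp; by rewrite npos leqnn.
- by rewrite -(prednK npos) /= -xn last.
- move=> m; have [n0 [f [r [fP mE]]]] := dspan m.
  pose g := fun i => ((f i).2).-1.
  have fPg : forall i, (0 < (f i).2 <= n)%N by move=> i; rewrite /n -(allg (f i).1); exact: fP.
  have gn : forall i, (g i < n)%N.
    by move=> i'; rewrite /g; case/andP: (fPg i') => h1 h2; rewrite prednK.
  exists (fun j => \sum_(i < n0 | g i == j) r i).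
  rewrite mE -(regroup n n0 g r (fun j => iter j phi x0) gn).
  apply: eq_bigr => i _; rewrite /g -xE; last by case/andP: (fPg i) => h1 h2; rewrite prednK.
  rewrite prednK; last by case/andP: (fPg i).
  by rewrite -(allg (f i).1).
Qed.

Lemma chain_exists : semisimple M -> nilpotent_endo phi -> (exists x, phi x <> 0) ->
  exists x0 n, chain_data x0 n /\ forall m, iter n phi m = 0.
Proof.
move=> ss [N0 hN0] [x1 hx1].
have [n [hn nmin]] := @ex_min_nat (fun n => forall m, iter n phi m = 0) N0 hN0.
case: n hn nmin => [|n'] hn nmin.
  by exfalso; apply: hx1; have := hn x1; rewrite /= => ->; rewrite linear0.
have [m hm] : exists m, iter n' phi m <> 0.
  apply: NNPP => h; apply: (nmin n' (ltnSn _)) => m; apply: NNPP => hm; apply: h; by exists m.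
have [k [S [v [Ssimp Sv mE]]]] := ss m.
have [i hi] : exists i, iter n' phi (v i) <> 0.
  apply: NNPP => h; apply: hm; rewrite mE iter_sum big1 // => i _.
  apply: NNPP => hi; apply: h; by exists i.
exists (v i), n'.+1; split => //; split => //.
exact: simple_Q (Ssimp i) (Sv i).
Qed.

End Main.
Arguments chain_data {R M}.
Arguments chain_exists {R M phi}.
Arguments P0_full {R M phi Gamma k x}.

Section Len.
Variables (R : pzRingType) (M : lmodType R).

Definition maximal_in (Q P : M -> Prop) :=
  forall L : M -> Prop, submodule L ->
    (forall x, Q x -> L x) -> (forall x, L x -> P x) ->
    (forall x, L x -> Q x) \/ (forall x, P x -> L x).

Definition series (N : nat -> M -> Prop) (d : nat) :=
  [/\ forall i, submodule (N i), forall x, N 0%N x -> x = 0 &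
      forall i, (i < d)%N ->
        [/\ forall x, N i x -> N i.+1 x, (exists2 x, N i.+1 x & ~ N i x) &
            maximal_in (N i) (N i.+1)]].

Definition chainL (L : nat -> M -> Prop) (k : nat) (P : M -> Prop) :=
  [/\ forall i, submodule (L i),
      forall i, (i < k)%N -> (forall x, L i x -> L i.+1 x) /\ (exists2 x, L i.+1 x & ~ L i x) &
      forall x, L k x -> P x].

Lemma chain_mono L k P : chainL L k P -> forall a b, (a <= b <= k)%N ->
  forall x, L a x -> L b x.
Proof.
case=> _ st _ a; elim=> [|b IH].
  by rewrite leqn0 => /andP [/eqP -> _].
move=> /andP [ab bk] x Lx.
case: (ltngtP a b.+1) => [ab'|ba|abe].
- have [h _] := st b bk; apply: h; apply: IH => //.
  by rewrite -ltnS ab' ltnW.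
- by move: ab; rewrite leqNgt ba.
- by rewrite -abe.
Qed.

Lemma key_mod (P Q A B : M -> Prop) :
  submodule P -> submodule Q -> submodule A -> submodule B ->
  (forall x, Q x -> P x) -> maximal_in Q P ->
  (forall x, A x -> B x) -> (forall x, B x -> P x) ->
  ~ (forall x, A x -> Q x) -> (forall x, B x -> Q x -> A x) ->
  forall x, B x -> A x.
Proof.
move=> [P0 PD PZ] [Q0 QD QZ] [A0 AD AZ] [B0 BD BZ] QP maxQ AB BP nAQ BQA.
pose Lm := fun y => exists q a, [/\ Q q, A a & y = q + a].
have sLm : submodule Lm.
  split.
  - by exists 0, 0; split => //; rewrite addr0.
  - move=> x y [q1 [a1 [h1 h2 ->]]] [q2 [a2 [h3 h4 ->]]].
    exists (q1 + q2), (a1 + a2); split; [exact: QD|exact: AD|by rewrite addrACA].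
  - move=> r x [q [a [h1 h2 ->]]]; exists (r *: q), (r *: a); split; [exact: QZ|exact: AZ|].
    by rewrite scalerDr.
case: (maxQ Lm sLm).
- by move=> q Qq; exists q, 0; split => //; rewrite addr0.
- move=> y [q [a [h1 h2 ->]]]; apply: PD; first exact: QP.
  exact: BP (AB _ h2).
- move=> h; exfalso; apply: nAQ => a Aa; apply: h; exists 0, a; split => //; by rewrite add0r.
- move=> h b Bb; have [q [a [Qq Aa bE]]] := h b (BP b Bb).
  have Bq : B q.
    have -> : q = b + (-1) *: a by rewrite scaleN1r bE addrK.
    apply: BD => //; apply: BZ; exact: AB.
  rewrite bE; apply: AD => //; exact: BQA.
Qed.

Lemma length_bound (N : nat -> M -> Prop) : forall d, series N d ->
  forall L, chainL L d.+1 (N d) -> False.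
Proof.
elim=> [|d IH] sN L cL.
  case: sN => _ N0 _; case: cL => sL st en.
  have [_ [x Lx nLx]] := st 0%N isT.
  apply: nLx; rewrite (N0 x (en x Lx)); by case: (sL 0%N).
have sN' : series N d.
  case: sN => h1 h2 h3; split => // i id; apply: h3; exact: ltnW.
case: (sN) => sNi _ sNst.
have [incQP _ maxQ] := sNst d (ltnSn d).
pose Q := N d.
have [j [jb jlow jhigh]] : exists j, [/\ (j <= d.+2)%N,
    forall i, (i < j)%N -> forall x, L i x -> Q x &
    (j <= d.+1)%N -> ~ (forall x, L j x -> Q x)].
  case: (classic (exists j0, (j0 <= d.+1)%N /\ ~ (forall x, L j0 x -> Q x))) => [[j0 hj0]|hno].
    have [j [[jd hj] jmin]] := @ex_min_nat (fun j => (j <= d.+1)%N /\ ~ (forall x, L j x -> Q x)) j0 hj0.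
    exists j; split => //; first by apply: (leq_trans jd).
    move=> i ij; apply: NNPP => hi; apply: (jmin i ij); split => //.
    by apply: (leq_trans (ltnW ij)).
  exists d.+2; split => //; last by rewrite ltnn.
  move=> i id; apply: NNPP => hi; apply: hno; exists i; split => //.
have cLm := @chain_mono L d.+2 (N d.+1) cL.
case: (cL) => sL stL enL.
pose L' := fun i => if (i < j)%N then L i else (fun x => L i.+1 x /\ Q x).
apply: (IH sN' L'); split.
- move=> i; rewrite /L'; case: ifP => _; first exact: sL.
  case: (sL i.+1) => [a1 a2 a3]; case: (sNi d) => [b1 b2 b3]; split.
  + by split.
  + by move=> x y [h1 h2] [h3 h4]; split; [apply: a2|apply: b2].
  + by move=> r x [h1 h2]; split; [apply: a3|apply: b3].
- move=> i id.
  have iL : (i.+1 < d.+2)%N by rewrite ltnS.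
  have Bsub : forall x, L i.+2 x -> N d.+1 x.
    move=> x h; apply: enL; apply: (cLm i.+2) => //; by rewrite leqnn andbT.
  case: (ltngtP i.+1 j) => [ij|ji|ij].
  + rewrite /L' ij (ltnW ij); exact: stL (ltnW iL).
  + have nij : (i < j)%N = false by apply/negbTE; rewrite -leqNgt.
    have nij1 : (i.+1 < j)%N = false by apply/negbTE; rewrite -leqNgt ltnW.
    rewrite /L' nij nij1; have [h1 h2] := stL _ iL; split.
      by move=> x [hx qx]; split => //; apply: h1.
    apply: NNPP => hn.
    have Bsub' : forall x, L i.+1 x -> L i.+2 x := h1.
    have hk := @key_mod (N d.+1) Q (L i.+1) (L i.+2) (sNi d.+1) (sNi d) (sL _) (sL _) incQP maxQ h1 Bsub.
    case: h2 => x Bx nAx; apply: nAx; apply: hk => //.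
    * move=> hAQ; apply: (jhigh (leq_trans (ltnW ji) id)) => y Ly; apply: hAQ.
      apply: (cLm j) => //; by rewrite (ltnW ji) (ltnW iL).
    * move=> y By Qy; apply: NNPP => nAy; apply: hn; exists y; [by split|].
      by case.
  + rewrite /L' -ij ltnSn ltnn; have [h1 h2] := stL _ iL.
    have [h3 _] := stL i (ltnW iL).
    split.
      move=> x Lx; split; first by apply: h1; apply: h3.
      by apply: (jlow i) => //; rewrite -ij.
    apply: NNPP => hn.
    have hk := @key_mod (N d.+1) Q (L i.+1) (L i.+2) (sNi d.+1) (sNi d) (sL _) (sL _) incQP maxQ h1 Bsub.
    case: h2 => x Bx nAx; apply: nAx; apply: hk => //.
    * by rewrite ij; apply: jhigh; rewrite -ij.
    * move=> y By Qy; apply: h3; apply: NNPP => nAy; apply: hn; exists y => //.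
- move=> x; rewrite /L'; case: ifP => [dj|_ [] //]; exact: jlow.
Qed.

End Len.
Arguments series {R M}.
Arguments chainL {R M}.
Arguments length_bound {R M N d}.
Arguments chain_mono {R M}.

Section ELin.
Variables (R : pzRingType) (M : lmodType R) (e : M -> M).
Hypothesis ha : forall x y, e (x + y) = e x + e y.
Hypothesis hs : forall (r : R) x, e (r *: x) = r *: e x.
Lemma elinP : linear e.
Proof. move=> r x y. by rewrite ha hs. Qed.
Definition elin : {linear M -> M} := HB.pack e (GRing.isLinear.Build R M M *:%R e elinP).
Lemma elinE x : elin x = e x. Proof. by []. Qed.
End ELin.
Arguments elin {R M e}.
Arguments elinE {R M e ha hs}.

Section Final.
Variables (R : pzRingType) (M : lmodType R) (phi : {linear M -> M}).

Lemma P2_full : semisimple M -> nilpotent_endo phi -> (exists x, phi x <> 0) ->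
  (finitely_generated M /\
     exists d : nat, composition_length M d /\ exists x : M, iter d.-1 phi x <> 0) ->
  exists x0 n, chain_data phi x0 n /\ forall m, span phi x0 n m.
Proof.
move=> ss nil nz [_ [d [[N [Nsub N0 Nall Nst]] [x hx]]]].
have [x0 [n [[Qx0 xnz xn0] nilM]]] := chain_exists ss nil nz.
exists x0, n; split => //.
have npos := @n_gt0 _ _ phi x0 n xnz xn0.
have dn : (d <= n)%N.
  rewrite leqNgt; apply/negP => nd; apply: hx.
  have h : (n <= d.-1)%N by rewrite -ltnS prednK // (leq_ltn_trans _ nd).
  by rewrite -(subnK h) iterD nilM iter0'.
apply: NNPP => nf.
have [m nm] : exists m, ~ span phi x0 n m.
  apply: NNPP => h; apply: nf => m; apply: NNPP => hm; apply: h; by exists m.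
have sN : series N d by split.
pose L := fun i => if (i <= n)%N then (fun a => span phi x0 n a /\ iter i phi a = 0)
                   else (fun _ : M => True).
apply: (length_bound sN L); split.
- move=> i; rewrite /L; case: ifP => _; last by split.
  case: (@span_sub _ _ phi x0 n) => [a1 a2 a3]; split.
  + by split => //; exact: iter0'.
  + by move=> a b [h1 h2] [h3 h4]; split; [apply: a2|rewrite iterDl h2 h4 addr0].
  + by move=> r a [h1 h2]; split; [apply: a3|rewrite iterZ h2 scaler0].
- move=> i id.
  have iN : (i <= n)%N by apply: leq_trans dn.
  case: (ltngtP i n) iN => [iN' _|//|-> _].
  + rewrite /L iN' (ltnW iN'); split.
      by move=> a [h1 h2]; split => //; rewrite iterS h2 linear0.
    have ii : (i <= n.-1)%N by rewrite -ltnS prednK.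
    exists (iter (n.-1 - i) phi x0).
      split; first by apply: (@span_X _ _ phi x0 n (n.-1 - i)); rewrite (leq_ltn_trans (leq_subr _ _)) // prednK.
      rewrite -iterD -[(i.+1 + _)%N]/((i + (n.-1 - i)).+1) subnKC //.
      by rewrite prednK.
    by case=> _; rewrite -iterD subnKC.
  + rewrite /L leqnn ltnn; split => //.
    by exists m => // [[]].
- by move=> a _; apply: Nall.
Qed.

End Final.

Section Zorn.
Variables (R : pzRingType) (M : lmodType R) (phi : {linear M -> M}).

Lemma P1_full : semisimple M -> nilpotent_endo phi -> (exists x, phi x <> 0) ->
  indecomposable_nilpotent phi ->
  exists x0 n, chain_data phi x0 n /\ forall m, span phi x0 n m.
Proof.
move=> ss nil nz [_ indec].
have [x0 [n [[Qx0 xnz xn0] nilM]]] := chain_exists ss nil nz.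
exists x0, n; split => //.
have npos := @n_gt0 _ _ phi x0 n xnz xn0.
pose sp := span phi x0 n.
have [sp0 spD spZ] := @span_sub _ _ phi x0 n.
have spphi : forall a, sp a -> sp (phi a) := @span_phi _ _ phi x0 n xnz xn0.
apply: NNPP => nf.
pose Pset := fun C : M -> Prop => [/\ (forall x y, C x -> C y -> C (x + y)),
   (forall (r : R) x, C x -> C (r *: x)), (forall x, C x -> C (phi x)) &
   (forall x, C x -> sp x -> x = 0)].
have [A [[AD AZ Aphi Adis] Amax]] : exists A, Pset A /\ forall B, classical_sets.proper A B -> ~ Pset B.
  apply: classical_sets.Zorn_bigcup => F FP Ftot.
  split.
  - move=> x y [C1 FC1 C1x] [C2 FC2 C2y].
    case: (Ftot C1 C2 FC1 FC2) => sub.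
    + exists C2 => //; case: (FP C2 FC2) => h _ _ _; apply: h => //; exact: sub.
    + exists C1 => //; case: (FP C1 FC1) => h _ _ _; apply: h => //; exact: sub.
  - move=> r x [C FC Cx]; exists C => //; case: (FP C FC) => _ h _ _; exact: h.
  - move=> x [C FC Cx]; exists C => //; case: (FP C FC) => _ _ h _; exact: h.
  - move=> x [C FC Cx]; case: (FP C FC) => _ _ _ h; exact: h.
have A0 : A 0.
  apply: NNPP => nA0.
  apply: (Amax (fun x => A x \/ x = 0)).
    split; first by move=> x Ax; left.
    by move=> h; apply: nA0; exact: (h 0 (or_intror erefl)).
  split.
  - move=> x y [Ax|->] [Ay|->]; [left; exact: AD|left; by rewrite addr0|left; by rewrite add0r|right; by rewrite addr0].
  - move=> r x [Ax|->]; [left; exact: AZ|right; exact: scaler0].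
  - move=> x [Ax|->]; [left; exact: Aphi|right; exact: linear0].
  - by move=> x [Ax|->] // sx; apply: Adis.
have AN : forall x, A x -> A (- x) by move=> x Ax; rewrite -scaleN1r; apply: AZ.
have spN : forall x, sp x -> sp (- x) by move=> x Ax; rewrite -scaleN1r; apply: spZ.
pose D := fun y => exists c a, [/\ A c, sp a & y = c + a].
have D0 : D 0 by exists 0, 0; split => //; rewrite addr0.
have DD : forall x y, D x -> D y -> D (x + y).
  move=> x y [c1 [a1 [h1 h2 ->]]] [c2 [a2 [h3 h4 ->]]].
  exists (c1 + c2), (a1 + a2); split; [exact: AD|exact: spD|by rewrite addrACA].
have DZ : forall (r : R) x, D x -> D (r *: x).
  move=> r x [c [a [h1 h2 ->]]]; exists (r *: c), (r *: a); split; [exact: AZ|exact: spZ|].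
  by rewrite scalerDr.
have Aiter : forall k c, A c -> A (iter k phi c) by elim=> //= k IH c Ac; apply: Aphi; apply: IH.
have spiter : forall k c, sp c -> sp (iter k phi c) by elim=> //= k IH c Ac; apply: spphi; apply: IH.
have sep : forall c a, A c -> sp a -> c + a = 0 -> c = 0 /\ a = 0.
  move=> c a Ac sa ca.
  have cE : c = - a by apply/eqP; rewrite -subr_eq0 opprK ca.
  have c0 : c = 0 by apply: Adis => //; rewrite cE; apply: spN.
  by split => //; move: ca; rewrite c0 add0r.
have cover : forall m, D m.
  move=> m0; apply: NNPP => nD.
  have [k [S [v [Ssimp Sv mE]]]] := ss m0.
  have [i hi] : exists i, ~ D (v i).
    apply: NNPP => h; apply: nD; rewrite mE; apply: (big_ind D) => // i _.
    apply: NNPP => hi; apply: h; by exists i.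
  have Qv := simple_Q (Ssimp i) (Sv i).
  have Dn : D (iter n phi (v i)) by exists 0, 0; split => //; rewrite nilM addr0.
  have [kk [nDk Dk1]] := @last_false (fun k => D (iter k phi (v i))) n hi Dn.
  set w := iter kk phi (v i) in nDk Dk1.
  have Qw : Qgen w := @Q_iter _ _ phi kk _ Qv.
  have [c [a [Ac sa pw]]] := Dk1.
  have pw' : phi w = c + a by exact: pw.
  have ia0 : iter n.-1 phi a = 0.
    have h : iter n.-1 phi c + iter n.-1 phi a = 0.
      rewrite -iterDl -pw' -iterSr prednK //; exact: nilM.
    by case: (sep _ _ (Aiter _ _ Ac) (spiter _ _ sa) h).
  have [b [sb pb bann]] := @pre_image _ _ phi x0 n Qx0 xnz xn0 a sa ia0.
  pose m' := w - b.
  have pm' : phi m' = c by rewrite /m' linearB pw' pb addrK.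
  have mann : forall r : R, r *: w = 0 -> r *: m' = 0.
    move=> r rw.
    have h : r *: c + r *: a = 0 by rewrite -scalerDr -pw' -linearZZ rw linear0.
    have [_ ra] := sep _ _ (AZ r _ Ac) (spZ r _ sa) h.
    by rewrite /m' scalerBr rw (bann r ra) subrr.
  apply: (Amax (fun y => exists c' (t : R), A c' /\ y = c' + t *: m')).
    split; first by move=> x Ax; exists x, 0; split => //; rewrite scale0r addr0.
    move=> h; apply: nDk.
    have Bm' : exists c' (t : R), A c' /\ m' = c' + t *: m'.
      by exists 0, 1; split => //; rewrite add0r scale1r.
    have Am' : A m' := h m' Bm'.
    exists m', b; split => //; by rewrite /m' subrK.
  split.
  - move=> x y [c1 [t1 [h1 ->]]] [c2 [t2 [h2 ->]]].
    exists (c1 + c2), (t1 + t2); split; first exact: AD.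
    by rewrite scalerDl addrACA.
  - move=> r x [c1 [t1 [h1 ->]]]; exists (r *: c1), (r * t1); split; first exact: AZ.
    by rewrite scalerDr scalerA.
  - move=> x [c1 [t1 [h1 ->]]]; exists (phi c1 + t1 *: c), 0; split.
      by apply: AD; [apply: Aphi|apply: AZ].
    by rewrite scale0r addr0 linearD linearZZ pm'.
  - move=> y [c1 [t1 [h1 yE]]] sy.
    have tw : t1 *: w = 0.
      apply: NNPP => tw; apply: nDk.
      have [s sE] := Qw t1 tw.
      rewrite -sE; apply: DZ.
      have -> : t1 *: w = (- c1) + (y + t1 *: b).
        by rewrite yE /m' scalerBr addrA addKr subrK.
      exists (- c1), (y + t1 *: b); split => //; [exact: AN|apply: spD => //; exact: spZ].
    have yc : y = c1 by rewrite yE (mann _ tw) addr0.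
    by rewrite yc; apply: Adis => //; rewrite -yc.
have cover' : forall m, exists c, A c /\ sp (m - c).
  move=> m; have [c [a [Ac sa ->]]] := cover m; exists c; split => //.
  by rewrite addrC addKr.
have uniq : forall m c1 c2, A c1 -> sp (m - c1) -> A c2 -> sp (m - c2) -> c1 = c2.
  move=> m c1 c2 A1 s1 A2 s2.
  have h : (c1 - c2) + ((m - c1) - (m - c2)) = 0.
    by rewrite opprB addrA (addrC (c1 - c2)) -addrA [c1 - c2 + _]addrA subrK addrA subrK subrr.
  have [h1 _] := sep _ _ (AD _ _ A1 (AN _ A2)) (spD _ _ s1 (spN _ s2)) h.
  by apply/eqP; rewrite -subr_eq0 h1.
pose e := fun m => proj1_sig (constructive_indefinite_description _ (cover' m)).
have eP : forall m, A (e m) /\ sp (m - e m).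
  move=> m; exact: (proj2_sig (constructive_indefinite_description _ (cover' m))).
have eD : forall x y, e (x + y) = e x + e y.
  move=> x y; have [h1 h2] := eP x; have [h3 h4] := eP y; have [h5 h6] := eP (x + y).
  apply: (uniq (x + y)) => //; first exact: AD.
  by rewrite opprD addrACA; apply: spD.
have eZ : forall (r : R) x, e (r *: x) = r *: e x.
  move=> r x; have [h1 h2] := eP x; have [h5 h6] := eP (r *: x).
  apply: (uniq (r *: x)) => //; first exact: AZ.
  by rewrite -scalerBr; apply: spZ.
apply: indec; split; first exact: nil.
exists (elin eD eZ); split.
- move=> x; rewrite !elinE; have [h1 h2] := eP x; have [h3 h4] := eP (e x).
  apply: (uniq (e x)) => //; by rewrite subrr.
- move=> h; apply: nf => m; have := h m; rewrite elinE => h0.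
  have [_ h2] := eP m; by rewrite h0 subr0 in h2.
- move=> h; have := h x0; rewrite elinE => h0.
  have [h1 h2] := eP x0.
  have e0 : e x0 = 0.
    apply: (uniq x0) => //; rewrite subr0; exact: (@span_X _ _ phi x0 n 0%N npos).
  apply: (@X_nz _ _ phi x0 n Qx0 xnz xn0 0%N npos) => /=; by rewrite -h0 e0.
- move=> x; rewrite !elinE; have [h1 h2] := eP x; have [h3 h4] := eP (phi x).
  apply: (uniq (phi x)) => //; first exact: Aphi.
  by rewrite -linearB; apply: spphi.
Qed.

End Zorn.

Theorem proposition2p3 (R : pzRingType) (M : lmodType R) (phi : {linear M -> M}) :
  semisimple M ->
  nilpotent_endo phi ->
  (exists x : M, phi x <> 0) ->
  [<-> (exists (Gamma : Type) (k : Gamma -> nat) (x : Gamma -> nat -> M),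
          nilpotent_jordan_base phi k x /\ exists g0 : Gamma, forall g, g = g0);
       indecomposable_nilpotent phi;
       finitely_generated M /\
         exists d : nat, composition_length M d /\ exists x : M, iter d.-1 phi x <> 0].
Proof.
move=> ss nil nz.
split; last split.
- move=> [Gamma [k [x [jb sg]]]].
  have [x0 [n [[Qx0 xnz xn0] full]]] := P0_full jb sg.
  exact: (@full_P1 _ _ phi x0 n Qx0 xnz xn0 full).
- move=> h.
  have [x0 [n [[Qx0 xnz xn0] full]]] := @P1_full _ _ phi ss nil nz h.
  exact: (@full_P2 _ _ phi x0 n Qx0 xnz xn0 full).
- move=> h.
  have [x0 [n [[Qx0 xnz xn0] full]]] := @P2_full _ _ phi ss nil nz h.
  exact: (@full_P0 _ _ phi x0 n Qx0 xnz xn0 full).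
Qed.
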